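(* Let $K$ be a field and $\nu$ a valuation on $K[x]$. Every key polynomial for $\nu$ is irreducible in $K[x]$.
   Context: $\nu:K[x]\to\Gamma\cup\{\infty\}$ is a valuation ($\Gamma$ an ordered abelian group) with $\nu(f)=\infty$ only for $f=0$; $\Gamma'=\Gamma\otimes\mathbb{Q}$. For $k\in\mathbb{N}$, $\partial_kf=\frac{1}{k!}\frac{d^kf}{dx^k}$. For nonconstant $f$, $\epsilon(f)=\max\{(\nu(f)-\nu(\partial_kf))/k\mid 1\le k\le\deg f,\ \partial_kf\ne0\}\in\Gamma'$. A key polynomial is a monic nonconstant $Q\in K[x]$ such that every nonconstant $f\in K[x]$ with $\epsilon(f)\ge\epsilon(Q)$ satisfies $\deg f\ge\deg Q$. *)

(* Defs.v *)
From mathcomp Require Import all_boot all_order all_algebra.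
Set Implicit Arguments. Unset Strict Implicit. Unset Printing Implicit Defensive.
Import GRing.Theory.
Local Open Scope ring_scope.

Record is_ordered_group (G : zmodType) (le : rel G) : Prop := {
  og_refl : forall a, le a a;
  og_antisym : forall a b, le a b -> le b a -> a = b;
  og_trans : forall a b c, le a b -> le b c -> le a c;
  og_total : forall a b, le a b || le b a;
  og_add : forall a b c, le a b -> le (a + c) (b + c) }.

(* Gamma u {oo} is [option G], with [None] = oo. *)
Definition leo (G : zmodType) (le : rel G) (x y : option G) : bool :=
  match x, y with
  | _, None => true
  | None, Some _ => false
  | Some a, Some b => le a b
  end.

Definition addo (G : zmodType) (x y : option G) : option G :=
  match x, y with
  | Some a, Some b => Some (a + b)
  | _, _ => None
  end.

Record is_valuation (K : fieldType) (G : zmodType) (le : rel G)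
    (nu : {poly K} -> option G) : Prop := {
  val_inf : forall f, nu f = None <-> f = 0;
  val_mul : forall f g, nu (f * g) = addo (nu f) (nu g);
  val_add : forall f g, leo le (nu f) (nu (f + g)) || leo le (nu g) (nu (f + g)) }.

(* Elements of Gamma' = Gamma (x) Q are represented as formal fractions
   (gamma, m) standing for gamma / m with m > 0; the order is
   gamma/m <= delta/n  iff  n*gamma <= m*delta. *)
Definition fle (G : zmodType) (le : rel G) (x y : G * nat) : bool :=
  le (x.1 *+ y.2) (y.1 *+ x.2).

Definition fmax (G : zmodType) (le : rel G) (x y : G * nat) : G * nat :=
  if fle le x y then y else x.

Definition fval (K : fieldType) (G : zmodType) (nu : {poly K} -> option G)
  (f : {poly K}) : G := odflt 0 (nu f).

Definition eps_term (K : fieldType) (G : zmodType) (nu : {poly K} -> option G)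
  (f : {poly K}) (k : nat) : G * nat :=
  (fval nu f - fval nu f^`N(k), k).

(* epsilon(f) = max { (nu f - nu d_k f)/k | 1 <= k <= deg f, d_k f <> 0 }.
   The term k = deg f is always present (d_{deg f} f = lead coef <> 0). *)
Definition epsilon (K : fieldType) (G : zmodType) (le : rel G)
  (nu : {poly K} -> option G) (f : {poly K}) : G * nat :=
  foldr (fmax le) (eps_term nu f (size f).-1)
    [seq eps_term nu f k | k <- iota 1 (size f).-1 & f^`N(k) != 0].

Definition key_poly (K : fieldType) (G : zmodType) (le : rel G)
  (nu : {poly K} -> option G) (Q : {poly K}) : Prop :=
  [/\ Q \is monic, (1 < size Q)%N &
      forall f : {poly K}, (1 < size f)%N ->
        fle le (epsilon le nu Q) (epsilon le nu f) -> (size Q <= size f)%N].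

(* Main.v *)
Require Import Defs.
From mathcomp Require Import all_boot all_order all_algebra.
From mathcomp Require Import ring zify.
Local Open Scope ring_scope.
Module Helpers.
Set Implicit Arguments. Unset Strict Implicit. Unset Printing Implicit Defensive.
Import GRing.Theory.

Section OG.
Variables (G : zmodType) (le : rel G) (Hle : is_ordered_group le).

Lemma leR a : le a a. Proof. exact: (og_refl Hle a). Qed.
Lemma leT a b c : le a b -> le b c -> le a c. Proof. exact: (og_trans Hle). Qed.

Lemma leD a b c d : le a b -> le c d -> le (a + c) (b + d).
Proof.
move=> hab hcd; apply: (leT (og_add Hle c hab)).
by rewrite (addrC b) (addrC b); apply: og_add.
Qed.

Lemma leN a b : le a b -> le (- b) (- a).
Proof.
move=> h; have := og_add Hle (- a - b) h.
by rewrite addrA subrr add0r addrCA subrr addr0.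
Qed.

Lemma leMn n a b : le a b -> le (a *+ n) (b *+ n).
Proof. by move=> h; elim: n => [|n IH]; rewrite ?mulr0n ?leR // !mulrS leD. Qed.

Lemma le_cancel n a b : (0 < n)%N -> le (a *+ n) (b *+ n) -> le a b.
Proof.
move=> n0 h; case/orP: (og_total Hle a b) => // hba.
have e : a *+ n = b *+ n by apply: (og_antisym Hle) => //; apply: leMn.
have x0 : le 0 (a - b) by have := og_add Hle (- b) hba; rewrite subrr.
have xn : (a - b) *+ n = 0 by rewrite mulrnBl e subrr.
have pos : forall k, le 0 ((a - b) *+ k).
  by elim=> [|k IH]; rewrite ?mulr0n ?leR // mulrS -[0]addr0 leD.
have : le (a - b) 0.
  move: n0 xn {h e}; case: n => // n _; rewrite mulrS => <-.
  by rewrite -{1}[a - b]addr0 leD ?leR.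
move=> h2; have : a - b = 0 by apply: (og_antisym Hle).
by move/eqP; rewrite subr_eq0 => /eqP ->; apply: leR.
Qed.

Lemma fleR x : fle le x x. Proof. exact: leR. Qed.

Lemma fleT x y z : (0 < y.2)%N -> fle le x y -> fle le y z -> fle le x z.
Proof.
rewrite /fle => y0 h1 h2; apply: (le_cancel y0).
have a := leMn z.2 h1; have b := leMn x.2 h2.
rewrite -!mulrnA in a b *.
apply: (leT (b := y.1 *+ (x.2 * z.2))).
  by move: a; rewrite mulnC.
by move: b; rewrite (mulnC z.2 x.2) (mulnC y.2 x.2).
Qed.

Lemma fle_total x y : fle le x y || fle le y x.
Proof. exact: og_total. Qed.

Lemma fmax_in x y : fmax le x y = x \/ fmax le x y = y.
Proof. by rewrite /fmax; case: ifP; auto. Qed.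

Lemma foldr_P (P : G * nat -> Prop) d s :
  P d -> (forall t, t \in s -> P t) -> P (foldr (fmax le) d s).
Proof.
elim: s => //= x s IH Pd Ps.
have Pr : P (foldr (fmax le) d s) by apply: IH => // t ts; apply: Ps; rewrite inE ts orbT.
case: (fmax_in x (foldr (fmax le) d s)) => -> //; apply: Ps; by rewrite inE eqxx.
Qed.

Lemma foldr_lub d s M : fle le d M -> (forall t, t \in s -> fle le t M) ->
  fle le (foldr (fmax le) d s) M.
Proof. exact: foldr_P. Qed.

Lemma foldr_ub d s : (0 < d.2)%N -> (forall t, t \in s -> (0 < t.2)%N) ->
  forall t, t \in d :: s -> fle le t (foldr (fmax le) d s).
Proof.
move=> d0; elim: s => [|x s IH] Ps t.
  by rewrite inE => /eqP ->; apply: fleR.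
have Ps' : forall t, t \in s -> (0 < t.2)%N by move=> u us; apply: Ps; rewrite inE us orbT.
have pr : (0 < (foldr (fmax le) d s).2)%N by apply: (foldr_P (P := fun t => (0 < t.2)%N)).
rewrite /=; set r := foldr (fmax le) d s in IH pr *; rewrite /fmax; case: ifP => hx.
  rewrite !inE; case/orP; first by move/eqP=> ->; apply: IH; rewrite ?inE ?eqxx.
  case/orP; first by move/eqP=> ->.
  by move=> ts; apply: IH; rewrite // inE ts orbT.
have hx' : fle le r x by case/orP: (fle_total x r) => //; rewrite hx.
rewrite !inE; case/orP; first by move/eqP=> ->; apply: fleT hx'; rewrite // IH ?inE ?eqxx.
case/orP; first by move/eqP=> ->; apply: fleR.
by move=> ts; apply: fleT hx'; rewrite // IH // inE ts orbT.
Qed.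

End OG.

Lemma nderivnMX (K : fieldType) (r : {poly K}) n :
  (r * 'X)^`N(n.+1) = r^`N(n) + r^`N(n.+1) * 'X.
Proof. by have := nderivnMXaddC n r 0; rewrite polyC0 addr0. Qed.

Lemma nderivnM (K : fieldType) (p q : {poly K}) k :
  (p * q)^`N(k) = \sum_(i < k.+1) p^`N(i) * q^`N(k - i).
Proof.
elim/poly_ind: p k => [|p c IH] k.
  rewrite mul0r nderivn_poly0 ?size_poly0 // big1 // => i _.
  by rewrite nderivn_poly0 ?size_poly0 // mul0r.
rewrite mulrDl mulrAC.
case: k => [|k].
  by rewrite big_ord_recl big_ord0 !nderivn0 addr0 mulrDl mulrAC.
rewrite nderivnD nderivnMX mul_polyC nderivnZ -mul_polyC IH IH.
rewrite !(big_ord_recl k.+1) !nderivn0 !subn0.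
under [in RHS]eq_bigr => i _ do rewrite lift0 nderivnMXaddC subSS mulrDl.
rewrite (eq_bigr (fun i : 'I_k.+1 => p^`N(i.+1) * q^`N(k - i)) (F1 := fun i : 'I_k.+1 => p^`N(lift ord0 i) * q^`N(k.+1 - lift ord0 i))); last by move=> i _; rewrite lift0 subSS.
rewrite big_split /=.
have -> : \sum_(i < k.+1) p^`N(i.+1) * 'X * q^`N(k - i) = (\sum_(i < k.+1) p^`N(i.+1) * q^`N(k - i)) * 'X.
  by rewrite mulr_suml; apply: eq_bigr => i _; rewrite mulrAC.
ring.
Qed.

Section Val.
Variables (K : fieldType) (G : zmodType) (le : rel G) (Hle : is_ordered_group le)
  (nu : {poly K} -> option G) (Hnu : is_valuation le nu).

Lemma fvalE f : f != 0 -> nu f = Some (fval nu f).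
Proof.
move=> f0; rewrite /fval; case E: (nu f) => [a|] //=.
by move/(val_inf Hnu): E => /eqP; rewrite (negbTE f0).
Qed.

Lemma nu0 : nu 0 = None.
Proof. by apply/(val_inf Hnu). Qed.

Lemma fvalM f g : f != 0 -> g != 0 -> fval nu (f * g) = fval nu f + fval nu g.
Proof. by move=> f0 g0; rewrite {1}/fval (val_mul Hnu) (fvalE f0) (fvalE g0). Qed.

Lemma ultra (I : Type) (r : seq I) (F : I -> {poly K}) :
  \sum_(i <- r) F i != 0 ->
  exists i, F i != 0 /\ le (fval nu (F i)) (fval nu (\sum_(i <- r) F i)).
Proof.
elim: r => [|x r IH]; first by rewrite big_nil eqxx.
rewrite big_cons => hT.
have := val_add Hnu (F x) (\sum_(i <- r) F i); rewrite (fvalE hT).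
case/orP => h.
  have Fx0 : F x != 0 by apply/eqP => E; move: h; rewrite E nu0.
  by exists x; split => //; move: h; rewrite (fvalE Fx0).
have S0 : \sum_(i <- r) F i != 0 by apply/eqP => E; move: h; rewrite E nu0.
have [i [Fi0 hi]] := IH S0; exists i; split => //.
by apply: (leT Hle hi); move: h; rewrite (fvalE S0).
Qed.

Lemma size_nderivn_nz (p : {poly K}) i : p^`N(i) != 0 -> (i < size p)%N.
Proof. by apply: contraR; rewrite -leqNgt => /nderivn_poly0 ->; rewrite eqxx. Qed.

Lemma nderivn_last (f : {poly K}) : (1 < size f)%N -> f^`N((size f).-1) != 0.
Proof.
move=> sf; apply/eqP => h; have := congr1 (fun p : {poly K} => p`_0) h.
rewrite coef_nderivn addn0 binn mulr1n coef0 -lead_coefE => /eqP.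
by rewrite lead_coef_eq0 => /eqP f0; move: sf; rewrite f0 size_poly0.
Qed.

Lemma eps_pos (f : {poly K}) : (1 < size f)%N -> (0 < (epsilon le nu f).2)%N.
Proof.
move=> sf; apply: (@foldr_P _ le (fun t => (0 < t.2)%N)) => /=; first by rewrite -ltnS prednK // ltnW.
move=> t /mapP [k]; rewrite mem_filter mem_iota => /andP [_ /andP [k1 _]] ->. by [].
Qed.

Lemma eps_ub (f : {poly K}) : (1 < size f)%N -> forall i, (0 < i)%N -> f^`N(i) != 0 ->
  fle le (eps_term nu f i) (epsilon le nu f).
Proof.
move=> sf i i0 fi; apply: (foldr_ub Hle).
- by rewrite /= -ltnS prednK // ltnW.
- move=> t /mapP [k]; rewrite mem_filter mem_iota => /andP [_ /andP [k1 _]] ->. by [].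
rewrite inE; apply/orP; right; apply: map_f.
rewrite mem_filter fi mem_iota i0 /= add1n prednK; [exact: size_nderivn_nz | exact: ltnW].
Qed.

Lemma eps_lub (f : {poly K}) M : (1 < size f)%N ->
  (forall k, (0 < k)%N -> f^`N(k) != 0 -> fle le (eps_term nu f k) M) ->
  fle le (epsilon le nu f) M.
Proof.
move=> sf H; apply: (foldr_lub).
  apply: H; last exact: nderivn_last.
  by rewrite -ltnS prednK // ltnW.
move=> t /mapP [k]; rewrite mem_filter mem_iota => /andP [fk /andP [k1 _]] ->.
exact: H.
Qed.

Lemma eps_bound (f : {poly K}) M : (1 < size f)%N -> fle le (epsilon le nu f) M ->
  forall i, (0 < i)%N -> f^`N(i) != 0 -> fle le (eps_term nu f i) M.
Proof.
move=> sf hM i i0 fi; apply: (fleT Hle (eps_pos sf)) hM.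
exact: eps_ub.
Qed.

Lemma main_ineq (g h : {poly K}) (e : G) (m : nat) : g != 0 -> h != 0 ->
  (forall i, (0 < i)%N -> g^`N(i) != 0 -> fle le (eps_term nu g i) (e, m)) ->
  (forall i, (0 < i)%N -> h^`N(i) != 0 -> fle le (eps_term nu h i) (e, m)) ->
  forall k, (0 < k)%N -> (g * h)^`N(k) != 0 -> fle le (eps_term nu (g * h) k) (e, m).
Proof.
move=> g0 h0 Hg Hh.
have Hg' : forall i, g^`N(i) != 0 -> le ((fval nu g - fval nu g^`N(i)) *+ m) (e *+ i).
  case=> [|i] gi; last exact: Hg.
  by rewrite nderivn0 subrr mul0rn mulr0n leR.
have Hh' : forall i, h^`N(i) != 0 -> le ((fval nu h - fval nu h^`N(i)) *+ m) (e *+ i).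
  case=> [|i] hi; last exact: Hh.
  by rewrite nderivn0 subrr mul0rn mulr0n leR.
move=> k _; rewrite /fle /eps_term /= nderivnM => S0.
have [i [T0 hi]] := ultra S0.
move: T0; rewrite mulf_eq0 negb_or => /andP [gi hj].
move: hi; rewrite fvalM // => hi.
rewrite fvalM //.
apply: (leT Hle (b := (fval nu g - fval nu g^`N(i) + (fval nu h - fval nu h^`N(k - i))) *+ m)).
  apply: leMn => //.
  have -> : fval nu g - fval nu g^`N(i) + (fval nu h - fval nu h^`N(k - i))
    = fval nu g + fval nu h - (fval nu g^`N(i) + fval nu h^`N(k - i)).
    by rewrite opprD addrACA.
  by apply: leD => //; [apply: leR | apply: leN].
rewrite mulrnDl.
have Hik : (i <= k)%N by rewrite -ltnS ltn_ord.
have -> : e *+ k = e *+ i + e *+ (k - i) by rewrite -mulrnDr subnKC.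
by apply: (leD Hle); [exact: Hg' | exact: Hh'].
Qed.

End Val.

End Helpers.
Import Helpers.


Theorem corollary4p4 (K : fieldType) (G : zmodType) (le : rel G)
  (Hle : is_ordered_group le) (nu : {poly K} -> option G)
  (Hnu : is_valuation le nu) (Q : {poly K}) :
  key_poly le nu Q -> irreducible_poly Q.
Proof.
case=> monQ sQ key; split => // q sq1 /dvdpP [r Er].
have Q0 : Q != 0 by rewrite -size_poly_gt0 (ltn_trans _ sQ).
have q0 : q != 0 by apply: contraNneq Q0 => q0; rewrite Er q0 GRing.mulr0.
have r0 : r != 0 by apply: contraNneq Q0 => r0; rewrite Er r0 GRing.mul0r.
have [/eqP/size_poly1P [c c0 rc] | sr1] := eqVneq (size r) 1%N.
  by rewrite Er rc mul_polyC eqp_sym eqp_scale.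
have sq : (1 < size q)%N.
  by rewrite ltn_neqAle eq_sym sq1 /= size_poly_gt0.
have sr : (1 < size r)%N.
  by rewrite ltn_neqAle eq_sym sr1 /= size_poly_gt0.
have sQrq : size Q = (size r + size q).-1 by rewrite Er size_mul.
have ltq : (size q < size Q)%N by rewrite sQrq; lia.
have ltr : (size r < size Q)%N by rewrite sQrq; lia.
have gen : forall M : G * nat, fle le (epsilon le nu r) M -> fle le (epsilon le nu q) M ->
    fle le (epsilon le nu Q) M.
  case=> e m hr hq; apply: (eps_lub sQ) => k k0 Qk.
  rewrite Er in Qk *.
  apply: (main_ineq Hle Hnu r0 q0 _ _ k0 Qk).
  - exact: (eps_bound Hle sr hr).
  - exact: (eps_bound Hle sq hq).
case/orP: (fle_total Hle (epsilon le nu r) (epsilon le nu q)) => h.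
  have := key q sq (gen _ h (fleR Hle _)).
  by rewrite leqNgt ltq.
have := key r sr (gen _ (fleR Hle _) h).
by rewrite leqNgt ltr.
Qed.
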